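(* Let $a\geq 1$ and $b\geq 2$ be integers. Then for Lebesgue-almost every $x\in A$ we have $\lim_{k\to\infty}T_{a,b}^k(x)\neq(0,\ldots,0)$.
   Context: For $n\geq 1$ let $\Lambda^n=\{x\in\mathbb{R}^n : 0\leq x_1\leq\cdots\leq x_n\}$. For integers $a,b\geq 1$ the map $T_{a,b}:\Lambda^{a+b}\to\Lambda^{a+b}$ sends $x$ to the vector obtained by arranging $x_1,\ldots,x_a,\,x_{a+1}-x_a,\ldots,x_{a+b}-x_a$ in nondecreasing order (each coordinate sequence of the orbit is nonincreasing, so the limit exists). $A=\{x\in\Lambda^{a+b}: x_1+\cdots+x_{a+b}\leq b\,x_{a+b}\}$. *)

(* Defs.v *)
From HB Require Import structures.
From mathcomp Require Import all_boot all_order all_algebra.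
From mathcomp Require Import all_classical all_reals all_analysis.
Set Implicit Arguments. Unset Strict Implicit. Unset Printing Implicit Defensive.
Import Order.TTheory GRing.Theory Num.Theory.
Import numFieldNormedType.Exports.
Local Open Scope classical_set_scope.
Local Open Scope ring_scope.

(* Points of R^n are row vectors 'rV[R]_n; coordinates are 0-indexed:
   x_1,...,x_n of the paper are x 0 0, ..., x 0 (n-1). *)

Definition coord (R : realType) (n : nat) (x : 'rV[R]_n) (k : nat) : R :=
  nth 0 [seq x 0 i | i <- enum 'I_n] k.

Definition Lambda (R : realType) (n : nat) : set 'rV[R]_n :=
  [set x | (forall i : 'I_n, 0 <= x 0 i) /\
           (forall i j : 'I_n, (i <= j)%N -> x 0 i <= x 0 j)].

(* T_{a,b}: arrange x_1,...,x_a, x_{a+1}-x_a, ..., x_{a+b}-x_a in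
   nondecreasing order.  (Index a.-1 is the paper's x_a; a >= 1.) *)
Definition Tab (R : realType) (a b : nat) (x : 'rV[R]_(a + b)) : 'rV[R]_(a + b) :=
  let xa := coord x a.-1 in
  let y := [seq (if (i < a)%N then x 0 i else x 0 i - xa) | i : 'I_(a + b) <- enum 'I_(a + b)] in
  let s := sort <=%R y in
  \row_i nth 0 s i.

Definition Aset (R : realType) (a b : nat) : set 'rV[R]_(a + b) :=
  [set x | Lambda x /\
     \sum_(i < a + b) x 0 i <= b%:R * coord x (a + b).-1].

Definition box (R : realType) (n : nat) (lo hi : 'rV[R]_n) : set 'rV[R]_n :=
  [set x | forall i : 'I_n, lo 0 i <= x 0 i <= hi 0 i].

Definition lebesgue_null (R : realType) (n : nat) (N : set 'rV[R]_n) : Prop :=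
  forall eps : R, 0 < eps ->
    exists lo hi : nat -> 'rV[R]_n,
      (forall k (i : 'I_n), lo k 0 i <= hi k 0 i) /\
      N `<=` \bigcup_k box (lo k) (hi k) /\
      (forall m : nat, \sum_(k < m) \prod_(i < n) (hi k 0 i - lo k 0 i) <= eps).

Arguments Tab {R} a b x.
Arguments Aset {R} a b x.

(* Main.v *)
Require Import Defs.
From HB Require Import structures.
From mathcomp Require Import all_boot all_order all_algebra.
From mathcomp Require Import all_classical all_reals all_analysis.
From mathcomp Require Import zify ring lra.
Import Order.TTheory GRing.Theory Num.Theory.
Import numFieldNormedType.Exports.
Local Open Scope classical_set_scope.
Local Open Scope ring_scope.

Lemma nth_le_of_count (R : realType) (s : seq R) (v : R) (i : nat) :
  sorted <=%R s -> (i < count (fun z : R => (z <= v)%R) s)%N -> nth 0 s i <= v.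
Proof.
elim: s i => [|h t IH] i //= Hs.
have Ht : sorted <=%R t by apply: path_sorted Hs.
case: i => [|i] /=.
  case: (boolP (h <= v)) => // hv /=; rewrite add0n -has_count => /hasP [z zt zv].
  have /allP := order_path_min (@le_trans _ R) Hs.
  by move=> /(_ z zt) hz; rewrite (le_trans hz zv) in hv.
move=> Hc; apply: IH => //.
by move: Hc; case: (h <= v) => /=; lia.
Qed.

Lemma count_iota_le (i n : nat) : count (fun k => (k <= i)%N) (iota 0 n) = minn n i.+1.
Proof.
elim: n => [|n IH] //.
rewrite -addn1 iotaD count_cat IH /= add0n addn0.
case: (leqP n i) => H.
all: lia.
Qed.

Lemma count_ord_le (n i : nat) : (i < n)%N ->
  count (fun j : 'I_n => (j <= i)%N) (enum 'I_n) = i.+1.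
Proof.
move=> H.
rewrite -(count_map val (fun k => (k <= i)%N)) val_enum_ord count_iota_le; lia.
Qed.

Lemma coordE (R : realType) n (x : 'rV[R]_n) (i : 'I_n) : Defs.coord x i = x 0 i.
Proof.
rewrite /Defs.coord (nth_map i) ?size_enum_ord //.
have -> : nth i (enum 'I_n) i = i by apply: val_inj => /=; rewrite nth_enum_ord.
by [].
Qed.

Lemma cvg_rowP (R : realType) n (u : nat -> 'rV[R]_n) (l : 'rV[R]_n) :
  (forall i, (fun k => u k 0 i) @ \oo --> l 0 i) -> u @ \oo --> l.
Proof.
move=> H; apply/cvg_mx_entourageP => A entA.
apply: filter_forall => i; apply: filter_forall => j.
rewrite (ord1 i).
have := cvg_entourage (H j) entA.
move=> Hj; have Hj' := Hj (fmap_filter _ eventually_filter).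
rewrite /= in Hj' *.
case: Hj' => N _ HN; exists N => // k Hk; apply/mem_set; exact: HN.
Qed.

Section Dyn.
Variables (R : realType) (a b : nat).
Hypothesis ha : (0 < a)%N.
Hypothesis hb : (0 < b)%N.

Let n := (a + b)%N.
Implicit Types x : 'rV[R]_(a + b).
Definition ia : 'I_(a + b) := @Ordinal (a + b) a.-1 ltac:(rewrite /n; lia).
Definition il : 'I_(a + b) := @Ordinal (a + b) (a + b).-1 ltac:(lia).

Lemma coordA (x : 'rV[R]_(a + b)) : Defs.coord x a.-1 = x 0 ia.
Proof. exact (@coordE R _ x ia). Qed.

Definition gT (x : 'rV[R]_(a + b)) (i : 'I_(a + b)) : R :=
  if (i < a)%N then x 0 i else x 0 i - Defs.coord x a.-1.

Definition yT (x : 'rV[R]_(a + b)) :=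
  [seq (if (i < a)%N then x 0 i else x 0 i - Defs.coord x a.-1) | i : 'I_(a + b) <- enum 'I_(a + b)].

Lemma TabE x : Tab a b x = \row_i nth 0 (sort <=%R (yT x)) i.
Proof. by []. Qed.

Lemma size_yT x : size (yT x) = (a + b)%N.
Proof. by rewrite size_map size_enum_ord. Qed.

Lemma size_syT x : size (sort <=%R (yT x)) = (a + b)%N.
Proof. by rewrite size_sort size_yT. Qed.

Lemma sorted_syT x : sorted <=%R (sort <=%R (yT x)).
Proof. apply: sort_sorted; exact: le_total. Qed.

Lemma perm_syT x : perm_eq (sort <=%R (yT x)) (yT x).
Proof. by rewrite perm_sort perm_refl. Qed.

Lemma TabE0 x i : Tab a b x 0 i = nth 0 (sort <=%R (yT x)) i.
Proof. by rewrite TabE mxE. Qed.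

Lemma gT_ge0 x i : Lambda x -> 0 <= gT x i.
Proof.
move=> [H0 Hm]; rewrite /gT coordA; case: ifP => Hi //.
rewrite subr_ge0; apply: Hm => /=; lia.
Qed.

Lemma gT_le x i : Lambda x -> gT x i <= x 0 i.
Proof.
move=> [H0 Hm]; rewrite /gT coordA; case: ifP => Hi //.
by rewrite lerBlDr lerDl.
Qed.

Lemma Lam_Tab x : Lambda x -> Lambda (Tab a b x).
Proof.
move=> Hx; split.
  move=> i; rewrite TabE0.
  have : nth 0 (sort <=%R (yT x)) i \in yT x.
    by rewrite -(perm_mem (perm_syT x)) mem_nth // size_syT.
  by case/mapP => j _ ->; exact: (gT_ge0 x j Hx).
move=> i j Hij; rewrite !TabE0.
apply: (sorted_leq_nth (@le_trans _ R) (@lexx _ R) 0 (sorted_syT x)) => //;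
  by rewrite inE size_syT.
Qed.

Lemma Tab_le x i : Lambda x -> Tab a b x 0 i <= x 0 i.
Proof.
move=> Hx; rewrite TabE0; apply: nth_le_of_count; first exact: sorted_syT.
rewrite (permP (perm_syT x)) count_map.
apply: (@leq_trans (count (fun j : 'I_(a+b) => (j <= i)%N) (enum 'I_(a + b)))).
  by rewrite count_ord_le.
apply: sub_count => j /= Hj.
apply: le_trans (gT_le x j Hx) _; apply: Hx.2 Hj.
Qed.

Lemma sum_Tab x : \sum_i Tab a b x 0 i = \sum_i x 0 i - b%:R * x 0 ia.
Proof.
under eq_bigr do rewrite TabE0.
rewrite -(big_mkord xpredT (fun i => nth 0 (sort <=%R (yT x)) i)).
have -> : \sum_(0 <= i < a + b) nth 0 (sort <=%R (yT x)) i = \sum_(v <- sort <=%R (yT x)) v.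
  by rewrite [RHS](big_nth 0) size_syT.
rewrite (perm_big _ (perm_syT x)).
rewrite big_map big_enum /=.
rewrite !big_split_ord /=.
have E1 : \sum_(i < a) (if (lshift b i < a)%N then x 0 (lshift b i) else x 0 (lshift b i) - Defs.coord x a.-1)
   = \sum_(i < a) x 0 (lshift b i).
  by apply: eq_bigr => i _; rewrite /= ltn_ord.
have E2 : \sum_(i < b) (if (rshift a i < a)%N then x 0 (rshift a i) else x 0 (rshift a i) - Defs.coord x a.-1)
   = \sum_(i < b) x 0 (rshift a i) - \sum_(i < b) x 0 ia.
  rewrite -sumrB; apply: eq_bigr => i _; rewrite /= ltnNge leq_addr /= coordA.
  by congr (_ - x 0 _); apply: val_inj.
rewrite E1 E2 sumr_const card_ord -mulr_natl; ring.
Qed.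

Lemma max_Tab x : Lambda x -> x 0 il - x 0 ia <= Tab a b x 0 il.
Proof.
move=> Hx.
have Hin : x 0 il - x 0 ia \in sort <=%R (yT x).
  rewrite (perm_mem (perm_syT x)); apply/mapP; exists il; first by rewrite mem_enum.
  rewrite /= ifF ?coordA //; last by apply/negbTE; rewrite -leqNgt; lia.
rewrite TabE0 -(nth_index 0 Hin).
have Hk : (index (x 0 il - x 0 ia)%R (sort <=%R (yT x)) < a + b)%N.
  by move: (index_mem (x 0 il - x 0 ia) (sort <=%R (yT x))); rewrite Hin size_syT.
apply: (sorted_leq_nth (@le_trans _ R) (@lexx _ R) 0 (sorted_syT x)).
- by rewrite inE size_syT.
- by rewrite inE size_syT /=; lia.
- by rewrite /= -ltnS prednK //; lia.
Qed.

Definition fT (x : 'rV[R]_(a + b)) : R := b%:R * x 0 il - \sum_i x 0 i.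

Lemma fT_Tab x : Lambda x -> fT x <= fT (Tab a b x).
Proof.
move=> Hx; rewrite /fT sum_Tab.
have := max_Tab x Hx => H.
have H2 : b%:R * (x 0 il - x 0 ia) <= b%:R * Tab a b x 0 il.
  by apply: ler_wpM2l => //; rewrite ler0n.
lra.
Qed.

Lemma fT_bound x : Lambda x -> fT x <= (b%:R - 1) * x 0 il.
Proof.
move=> [H0 _]; rewrite /fT (bigD1 il) //=.
have : 0 <= \sum_(i < a + b | i != il) x 0 i by apply: sumr_ge0.
lra.
Qed.

Lemma iter_Tab x k : Lambda x -> Lambda (iter k (Tab a b) x) /\ fT x <= fT (iter k (Tab a b) x).
Proof.
move=> Hx; elim: k => [|k [IH1 IH2]] /=; first by split.
split; first exact: Lam_Tab.
apply: le_trans IH2 (fT_Tab _ IH1).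
Qed.



Lemma coordL (x : 'rV[R]_(a + b)) : Defs.coord x (a + b).-1 = x 0 il.
Proof. exact (@coordE R _ x il). Qed.

Hypothesis hb2 : (1 < b)%N.

Lemma good x : Lambda x -> 0 < fT x ->
  exists l : 'rV[R]_(a + b),
    (fun k : nat => iter k (Tab a b) x) @ \oo --> l /\ l != 0.
Proof.
move=> Hx Hf.
pose u := fun k => iter k (Tab a b) x.
have Hu k : Lambda (u k) /\ fT x <= fT (u k) by apply: iter_Tab.
have Hdec i : nonincreasing_seq (fun k => u k 0 i).
  apply/nonincreasing_seqP => k; rewrite /u iterS; apply: Tab_le; exact (Hu k).1.
have Hcv i : cvgn (fun k => u k 0 i).
  apply: nonincreasing_is_cvgn => //; exists 0 => _ [k _ <-]; exact: ((Hu k).1.1 i).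
exists (\row_i limn (fun k => u k 0 i)); split.
  apply: cvg_rowP => i; rewrite mxE; exact: (cvg_toP (Hcv i) erefl).
apply/negP => /eqP Hl.
have Hb1 : 0 < b%:R - 1 :> R by rewrite subr_gt0 ltr1n.
have : fT x / (b%:R - 1) <= limn (fun k => u k 0 il).
  apply: limr_ge (Hcv il) _; apply: nearW => k.
  rewrite ler_pdivrMr //.
  have := fT_bound (u k) (Hu k).1; have := (Hu k).2.
  rewrite mulrC; lra.
have -> : limn (fun k => u k 0 il) = 0.
  by have := congr1 (fun m : 'rV[R]_(a + b) => m 0 il) Hl; rewrite !mxE.
rewrite ler_pdivrMr // mul0r; lra.
Qed.

End Dyn.

Set Implicit Arguments. Unset Strict Implicit.
Definition vol (R : realType) n (p : 'rV[R]_n * 'rV[R]_n) := \prod_(i < n) (p.2 0 i - p.1 0 i).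

Definition fin_small (R : realType) n (S : set 'rV[R]_n) := forall e : R, 0 < e ->
  exists s : seq ('rV[R]_n * 'rV[R]_n),
    [/\ (forall p, p \in s -> forall i, p.1 0 i <= p.2 0 i),
        (forall x, S x -> exists2 p, p \in s & box p.1 p.2 x) &
        \sum_(p <- s) vol p <= e].

Lemma digit (R : realType) (K : nat) (h t : R) : (0 < K)%N -> 0 < h ->
  0 <= t <= K%:R * h -> exists j : 'I_K, h * j%:R <= t <= h * j%:R + h.
Proof.
move=> HK Hh /andP [t0 tK].
have th0 : 0 <= t / h by apply: divr_ge0 => //; exact: ltW.
case: (ltnP (Num.truncn (t / h)) K) => Hq.
  exists (Ordinal Hq) => /=.
  have /andP [H1 H2] := truncn_itv th0.
  apply/andP; split.
    by rewrite -ler_pdivlMl // [_ * t]mulrC.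
  have -> : h * (Num.truncn (t / h))%:R + h = h * (Num.truncn (t / h)).+1%:R.
    by rewrite -natr1 mulrDr mulr1.
  by rewrite -ler_pdivrMl // [_ * t]mulrC ltW.
have HK1 : (K.-1 < K)%N by rewrite prednK.
exists (Ordinal HK1) => /=.
have H1 : K%:R <= t / h by rewrite -truncn_ge_nat.
apply/andP; split.
  rewrite -ler_pdivlMl // mulrC (le_trans _ H1) // ler_nat; lia.
have -> : h * (K.-1)%:R + h = K%:R * h.
  by rewrite -[in RHS](prednK HK) -natr1 mulrDl mul1r mulrC.
exact: tK.
Qed.

Lemma grid (R : realType) n (il : 'I_n) (c Mr : R) (S : set 'rV[R]_n) :
  (1 < n)%N -> 0 < c -> 0 < Mr ->
  (forall x, S x -> (forall i, 0 <= x 0 i <= Mr) /\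
                    \sum_(i | i != il) x 0 i = c * x 0 il) ->
  fin_small S.
Proof.
move=> hn hc hM HS e he.
pose m := n.-1.
have En : n = m.+1 by rewrite /m prednK //; lia.
have Hm : (0 < m)%N by rewrite /m; lia.
pose q := m%:R * Mr ^+ n / (c * e).
pose K := (Num.truncn q).+1.
have HK : (0 < K)%N by [].
have HqK : q < K%:R by apply: truncnS_gt.
have HK0 : (0 : R) < K%:R by rewrite ltr0n.
pose dl := Mr / K%:R.
have hdl : 0 < dl by apply: divr_gt0.
pose h := m%:R * dl / c / K%:R.
have hh : 0 < h by apply: divr_gt0 => //; apply: divr_gt0 => //; apply: mulr_gt0; rewrite ?ltr0n.
pose sd (d : {ffun 'I_n -> 'I_K}) := dl * \sum_(i | i != il) (d i)%:R.
pose lo (d : {ffun 'I_n -> 'I_K}) : 'rV[R]_n :=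
  \row_i (if i == il then sd d / c + h * (d i)%:R else dl * (d i)%:R).
pose hi (d : {ffun 'I_n -> 'I_K}) : 'rV[R]_n :=
  \row_i (if i == il then sd d / c + h * (d i)%:R + h else dl * (d i)%:R + dl).
exists [seq (lo d, hi d) | d <- enum {ffun 'I_n -> 'I_K}]; split.
- move=> p /mapP [d _ ->] i /=; rewrite !mxE; case: ifP => _; rewrite lerDl; exact: ltW.
- move=> x Sx; have [Hb Hs] := HS x Sx.
  have Hd : forall i : 'I_n, exists j : 'I_K, i != il -> dl * j%:R <= x 0 i <= dl * j%:R + dl.
    move=> i; have [j Hj] : exists j : 'I_K, dl * j%:R <= x 0 i <= dl * j%:R + dl.
      apply: digit => //; have /andP [H1 H2] := Hb i; rewrite H1 /= /dl.
      by rewrite mulrC divfK // gt_eqF.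
    by exists j.
  have [f Hf] := choice Hd.
  pose s := dl * \sum_(i | i != il) (f i)%:R.
  have Hs1 : s <= c * x 0 il.
    rewrite -Hs /s mulr_sumr; apply: ler_sum => i Hi.
    by have /andP [] := Hf i Hi.
  have Hs2 : c * x 0 il <= s + m%:R * dl.
    rewrite -Hs.
    apply: (@le_trans _ _ (\sum_(i | i != il) (dl * (f i)%:R + dl))).
      by apply: ler_sum => i Hi; have /andP [] := Hf i Hi.
    rewrite big_split /= -mulr_sumr (sumr_const (predC1 il)) cardC1 card_ord -/m.
    by rewrite mulr_natl.
  have Ht : 0 <= x 0 il - s / c <= K%:R * h.
    have -> : K%:R * h = m%:R * dl / c.
      by rewrite /h; field; rewrite !gt_eqF.
    apply/andP; split.
      by rewrite subr_ge0 ler_pdivrMr // mulrC.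
    rewrite lerBlDl -mulrDl ler_pdivlMr // mulrC; lra.
  have [j Hj] := digit HK hh Ht.
  pose d := [ffun i => if i == il then j else f i].
  have Esd : sd d = s.
    rewrite /sd /s; congr (_ * _); apply: eq_bigr => i Hi; by rewrite ffunE (negbTE Hi).
  exists (lo d, hi d); first by apply/mapP; exists d => //; rewrite mem_enum.
  move=> i /=; rewrite !mxE ffunE Esd; case: (eqVneq i il) => [->|Hi].
    move: Hj => /andP [H1 H2]; apply/andP; split; lra.
  exact: Hf i Hi.
have Ev : forall d, vol (lo d, hi d) = h * dl ^+ m.
  move=> d; rewrite /vol (bigD1 il) //= !mxE eqxx.
  rewrite (eq_bigr (fun _ => dl)); last by move=> i Hi; rewrite !mxE (negbTE Hi); ring.
  by rewrite (prodr_const (predC1 il)) cardC1 card_ord -/m; congr (_ * _); ring.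
rewrite big_map big_enum /=.
under eq_bigr do rewrite Ev.
rewrite sumr_const card_ffun !card_ord.
have E : (h * dl ^+ m) *+ (K ^ n) = m%:R * Mr ^+ n / (c * K%:R).
  rewrite -mulr_natr natrX En /h /dl expr_div_n !exprS; field.
  by rewrite !gt_eqF // exprn_gt0.
rewrite E ler_pdivrMr; last by apply: mulr_gt0.
have Eq : m%:R * Mr ^+ n = q * (c * e) by rewrite /q; field; rewrite !gt_eqF.
rewrite Eq; have hce := mulr_gt0 hc he.
have : q * (c * e) <= K%:R * (c * e) by rewrite ler_pM2r // ltW.
lra.
Qed.

Section Seqs.
Variable T : eqType.
Variable g : nat -> seq T.
Hypothesis g_ne : forall j, (0 < size (g j))%N.
Definition LL M := flatten (map g (iota 0 M.+1)).

Lemma LL_S M : LL M.+1 = LL M ++ g M.+1.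
Proof. by rewrite /LL -addn1 iotaD map_cat flatten_cat /= cats0. Qed.

Lemma size_LL M : (M < size (LL M))%N.
Proof.
elim: M => [|M IH]; first by rewrite /LL /= cats0 g_ne.
rewrite LL_S size_cat; have := g_ne M.+1; lia.
Qed.

Lemma LL_prefix M M' : (M <= M')%N -> exists r, LL M' = LL M ++ r.
Proof.
move=> H; rewrite -(subnKC H); elim: (M' - M)%N => [|d [r IH]].
  by exists [::]; rewrite addn0 cats0.
by exists (r ++ g (M + d).+1); rewrite addnS LL_S IH catA.
Qed.

Lemma nth_LL d M M' k : (k < size (LL M))%N -> (k < size (LL M'))%N ->
  nth d (LL M') k = nth d (LL M) k.
Proof.
move=> H1 H2; case: (leqP M M') => HM.
  by have [r ->] := LL_prefix HM; rewrite nth_cat H1.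
have [r ->] := LL_prefix (ltnW HM); by rewrite nth_cat H2.
Qed.

Definition BB d k := nth d (LL k) k.

Lemma BB_nth d M k : (k < size (LL M))%N -> BB d k = nth d (LL M) k.
Proof. move=> H; rewrite /BB (nth_LL d H) //; exact: size_LL. Qed.

Lemma mem_LL p M : p \in LL M -> exists2 j, (j <= M)%N & p \in g j.
Proof.
case/flatten_mapP => j; rewrite mem_iota add0n => /andP [_ Hj] Hp.
by exists j.
Qed.

Lemma LL_mem p j : p \in g j -> p \in LL j.
Proof.
move=> H; apply/flatten_mapP; exists j => //; rewrite mem_iota; lia.
Qed.
End Seqs.

Lemma geom_sum (R : realType) (eps : R) N :
  \sum_(j < N) eps / 2 ^+ j.+1 = eps - eps / 2 ^+ N.
Proof.
elim: N => [|N IH]; first by rewrite big_ord0 expr0 divr1 subrr.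
rewrite big_ord_recr /= IH exprS.
have h : (2 : R) ^+ N != 0 by rewrite expf_neq0.
field; rewrite h /=; lra.
Qed.

Section Null.
Variable R : realType.
Variable n : nat.
Hypothesis hn : (0 < n)%N.

Lemma vol0 : vol ((0 : 'rV[R]_n), (0 : 'rV[R]_n)) = 0.
Proof.
by rewrite /vol (bigD1 (Ordinal hn)) //= !mxE subrr mul0r.
Qed.

Lemma null_of_fin_small (S : nat -> set 'rV[R]_n) :
  (forall j, fin_small (S j)) -> lebesgue_null (\bigcup_j S j).
Proof.
move=> HS eps heps.
have H1 : forall j, exists s : seq ('rV[R]_n * 'rV[R]_n),
    [/\ (forall p, p \in s -> forall i, p.1 0 i <= p.2 0 i),
        (forall x, S j x -> exists2 p, p \in s & box p.1 p.2 x) &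
        \sum_(p <- s) vol p <= eps / 2 ^+ j.+1].
  move=> j; apply: HS; apply: divr_gt0 => //; exact: exprn_gt0.
have [f Hf] := choice H1.
pose g j := ((0 : 'rV[R]_n), (0 : 'rV[R]_n)) :: f j.
have gne j : (0 < size (g j))%N by [].
pose d0 := ((0 : 'rV[R]_n), (0 : 'rV[R]_n)).
have Hg p j : p \in g j -> forall i, p.1 0 i <= p.2 0 i.
  rewrite inE => /orP [/eqP -> i|Hp]; first by rewrite /= mxE.
  by have [H _ _] := Hf j; apply: H.
have Hle k i : (BB g d0 k).1 0 i <= (BB g d0 k).2 0 i.
  have : BB g d0 k \in LL g k by rewrite /BB mem_nth // size_LL.
  by case/mem_LL => j _ /Hg; apply.
exists (fun k => (BB g d0 k).1), (fun k => (BB g d0 k).2); split => //; split.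
  move=> x [j _ Sx].
  have [_ H _] := Hf j; have [p pf bx] := H x Sx.
  have pL : p \in LL g j by apply: LL_mem; rewrite inE pf orbT.
  exists (index p (LL g j)) => //.
  have -> : BB g d0 (index p (LL g j)) = p by rewrite (@BB_nth _ g gne d0 j) ?index_mem // nth_index.
  exact: bx.
move=> m.
have vge k : 0 <= vol (BB g d0 k).
  by apply: prodr_ge0 => i _; rewrite subr_ge0.
have E : \sum_(k < m) \prod_(i < n) ((BB g d0 k).2 0 i - (BB g d0 k).1 0 i)
         = \sum_(0 <= k < m) vol (nth d0 (LL g m) k).
  rewrite big_mkord; apply: eq_bigr => k _; rewrite (@BB_nth _ g gne d0 m) //.
  apply: leq_trans (ltn_ord k) (ltnW (size_LL gne m)).
rewrite E.
have vge' k : 0 <= vol (nth d0 (LL g m) k).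
  case: (ltnP k (size (LL g m))) => Hk.
    rewrite -(@BB_nth _ g gne d0 m _ Hk); exact: vge.
  by rewrite nth_default // vol0.
apply: (@le_trans _ _ (\sum_(0 <= k < size (LL g m)) vol (nth d0 (LL g m) k))).
  rewrite (big_cat_nat _ (n := m) (p := size (LL g m))) //=; last exact: (ltnW (size_LL gne m)).
  by rewrite lerDl; apply: sumr_ge0 => k _.
rewrite -(big_nth d0 xpredT (@vol R n)) /LL big_flatten big_map.
apply: (@le_trans _ _ (\sum_(j <- iota 0 m.+1) eps / 2 ^+ j.+1)).
  apply: ler_sum => j _; rewrite big_cons /= vol0 add0r.
  by have [_ _ H] := Hf j.
have -> : \sum_(j <- iota 0 m.+1) eps / 2 ^+ j.+1 = \sum_(j < m.+1) eps / 2 ^+ j.+1.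
  by rewrite -(big_mkord xpredT (fun j => eps / 2 ^+ j.+1)) /index_iota subn0.
rewrite geom_sum lerBlDr lerDl; apply: divr_ge0; [exact: ltW | exact: exprn_ge0].
Qed.
End Null.

Unset Implicit Arguments.
Set Strict Implicit.

Theorem lemma4p5 (R : realType) (a b : nat) (ha : (1 <= a)%N) (hb : (2 <= b)%N) :
  exists N : set 'rV[R]_(a + b), lebesgue_null N /\
    forall x, Aset a b x -> ~ N x ->
      exists l : 'rV[R]_(a + b),
        (fun k : nat => iter k (Tab a b) x) @ \oo --> l /\ l != 0.
Proof.
have hb1 : (0 < b)%N by lia.
pose iL := il a b ha hb1.
pose SM (M : nat) := [set x : 'rV[R]_(a + b) | Lambda x /\
   \sum_i x 0 i = b%:R * x 0 iL /\ x 0 iL <= M.+1%:R].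
exists (\bigcup_M SM M); split.
  apply: null_of_fin_small; first lia.
  move=> M; apply: (@grid R (a + b) iL (b%:R - 1) M.+1%:R).
  - lia.
  - by rewrite subr_gt0 ltr1n.
  - by rewrite ltr0n.
  move=> x [[L0 L1] [Hs HM]]; split.
    move=> i; rewrite L0 /=; apply: le_trans HM; apply: L1 => /=.
    by rewrite -ltnS prednK ?ltn_ord //; lia.
  move: Hs; rewrite (bigD1 iL) //=; lra.
move=> x [Lx Hsum] NN.
apply: (@good R a b ha hb1 hb x Lx) => //.
rewrite /fT subr_gt0 -/iL.
rewrite (@coordL R a b ha hb1 x) -/iL in Hsum.
rewrite lt_neqAle Hsum andbT; apply/eqP => E.
apply: NN; exists (Num.truncn (x 0 iL)) => //; split => //; split; first by rewrite E.
apply: ltW; apply: truncnS_gt.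
Qed.
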